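(* Let $\lambda>0$, let $n\ge 1$, and let $h:\mathbb{R}\to\mathbb{R}\cup\{+\infty\}$ be proper, closed and convex, such that $0\in\mathrm{dom}(h)$, $h(0)=0$, and $0$ is an accumulation point of $\mathrm{dom}(h)$. Let $\nu=(\mathcal{S}_0,\mathcal{S}_1,\mathcal{S}_\bullet)$ be a partition of $\{1,\dots,n\}$ and define $g^\nu:\mathbb{R}^n\to\mathbb{R}\cup\{+\infty\}$ by $$g^\nu(\mathbf{x})=\lambda\|\mathbf{x}\|_0+\sum_{i=1}^n h(x_i)+\eta(\mathbf{x}\in\mathcal{X}^\nu).$$ Then the convex conjugate $(g^\nu)^*$ is separable, i.e. $(g^\nu)^*(\mathbf{v})=\sum_{i=1}^n (g^\nu_i)^*(v_i)$, where for every $v\in\mathbb{R}$ $$(g^\nu_i)^*(v)=\begin{cases}0 & \text{if } i\in\mathcal{S}_0,\\ h^*(v)-\lambda & \text{if } i\in\mathcal{S}_1,\\ \max\big(h^*(v)-\lambda,0\big) & \text{if } i\in\mathcal{S}_\bullet.\end{cases}$$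
   Context: $\|\mathbf{x}\|_0$ denotes the number of nonzero entries of $\mathbf{x}$. $\eta(\cdot)$ is the convex indicator: $\eta(\text{condition})=0$ if the condition holds and $+\infty$ otherwise. For a partition $\nu=(\mathcal{S}_0,\mathcal{S}_1,\mathcal{S}_\bullet)$ of $\{1,\dots,n\}$, the region is $\mathcal{X}^\nu=\{\mathbf{x}\in\mathbb{R}^n: x_i=0\ \forall i\in\mathcal{S}_0,\ x_i\neq 0\ \forall i\in\mathcal{S}_1\}$ (entries indexed by $\mathcal{S}_\bullet$ are free). $h^*$ denotes the convex conjugate $h^*(v)=\sup_{x\in\mathbb{R}} vx-h(x)$. A point $0$ is an accumulation point of a set $\mathcal{C}\subseteq\mathbb{R}$ if every neighborhood of $0$ contains a point of $\mathcal{C}$ other than $0$. *)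

(* Defs.v *)
From HB Require Import structures.
From mathcomp Require Import all_boot all_order all_algebra.
From mathcomp Require Import all_classical all_reals all_analysis.
Set Implicit Arguments. Unset Strict Implicit. Unset Printing Implicit Defensive.
Import Order.TTheory GRing.Theory Num.Theory.
Import numFieldNormedType.Exports.
Local Open Scope classical_set_scope.
Local Open Scope ring_scope.
Local Open Scope ereal_scope.

Section defs.
Variable R : realType.

Definition edom (h : R -> \bar R) : set R := [set x | h x < +oo].

Definition proper_fun (h : R -> \bar R) : Prop :=
  (forall x, h x != -oo) /\ exists x, h x < +oo.

Definition closed_fun (h : R -> \bar R) : Prop :=
  closed [set p : R * R | h p.1 <= p.2%:E].

(* convex (for proper functions, values in R \cup {+oo}) *)
Definition convex_efun (h : R -> \bar R) : Prop :=
  forall (x y t : R), (0 < t < 1)%R ->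
    h (t * x + (1 - t) * y)%R <= t%:E * h x + (1 - t)%:E * h y.

Definition accum_at0 (C : set R) : Prop :=
  forall U : set R, nbhs (0%R : R) U -> exists y, [/\ U y, y != (0%R : R) & C y].

Definition conj1 (h : R -> \bar R) (v : R) : \bar R :=
  ereal_sup [set (v * x)%:E - h x | x in [set: R]].

Definition conjn (n : nat) (g : ('I_n -> R) -> \bar R) (v : 'I_n -> R) : \bar R :=
  ereal_sup [set (\sum_(i < n) v i * x i)%R%:E - g x | x in [set: 'I_n -> R]].

Definition l0norm (n : nat) (x : 'I_n -> R) : nat := #|[set i : 'I_n | x i != (0%R : R)]|%N.

Definition in_region (n : nat) (S0 S1 : {set 'I_n}) (x : 'I_n -> R) : Prop :=
  (forall i, i \in S0 -> x i = (0%R : R)) /\ (forall i, i \in S1 -> x i != (0%R : R)).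

Definition eta_ind (P : Prop) : \bar R := if `[< P >] then 0 else +oo.

Definition g_nu (lam : R) (h : R -> \bar R) (n : nat) (S0 S1 : {set 'I_n})
    (x : 'I_n -> R) : \bar R :=
  (lam * (l0norm x)%:R)%R%:E + \sum_(i < n) h (x i) + eta_ind (in_region S0 S1 x).

Definition g_nu_i_conj (lam : R) (h : R -> \bar R) (n : nat)
    (S0 S1 Sb : {set 'I_n}) (i : 'I_n) (v : R) : \bar R :=
  if i \in S0 then 0
  else if i \in S1 then conj1 h v - lam%:E
  else maxe (conj1 h v - lam%:E) 0.

Definition partition3 (n : nat) (S0 S1 Sb : {set 'I_n}) : Prop :=
  [/\ S0 :&: S1 = finset.set0, S0 :&: Sb = finset.set0, S1 :&: Sb = finset.set0
    & S0 :|: S1 :|: Sb = finset.setT].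

End defs.

(* Main.v *)
Require Import Defs.
From HB Require Import structures.
From mathcomp Require Import all_boot all_order all_algebra.
From mathcomp Require Import all_classical all_reals all_analysis.
From mathcomp Require Import ring lra.
Import Order.TTheory GRing.Theory Num.Theory.
Import numFieldNormedType.Exports.
Local Open Scope classical_set_scope.
Local Open Scope ring_scope.
Local Open Scope ereal_scope.

Section helpers.
Variable R : realType.

Lemma sup_shift (x : \bar R) (B : set (\bar R)) S :
  -oo < ereal_sup B -> (forall b, B b -> x + b <= S) -> x + ereal_sup B <= S.
Proof.
move=> HB H; case: x H => [r| |] H.
- rewrite -leeBrDl //; apply/ereal_supP => b Bb; rewrite leeBrDl //; exact: H.
- have [b Bb bgt] := ereal_sup_gtP HB.
  have := H b Bb; rewrite addye; last by rewrite -ltNye.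
  by move=> Sy; rewrite (_ : S = +oo) ?leey //; apply/eqP; rewrite eq_le leey.
- by rewrite addNye leNye.
Qed.

Lemma sup_add2 (A B : set (\bar R)) :
  -oo < ereal_sup A -> -oo < ereal_sup B ->
  ereal_sup A + ereal_sup B <=
  ereal_sup [set z | exists a b, [/\ A a, B b & z = a + b]].
Proof.
move=> HA HB; rewrite addeC; apply: sup_shift => // a Aa.
rewrite addeC; apply: sup_shift => // b Bb.
by apply: ereal_sup_ubound; exists a, b.
Qed.

Lemma sum_gtNy n (F : 'I_n -> \bar R) : (forall i, -oo < F i) -> -oo < \sum_(i < n) F i.
Proof.
move=> H; apply: (big_ind (fun x => -oo < x)) => //.
by case=> [a| |]; case=> [b| |] //= _ _; rewrite ltNyr.
Qed.

Lemma sup_sumn n (F : 'I_n -> R -> \bar R) :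
  (forall i, -oo < ereal_sup (range (F i))) ->
  \sum_(i < n) ereal_sup (range (F i)) <=
  ereal_sup [set \sum_(i < n) F i (x i) | x in [set: 'I_n -> R]].
Proof.
elim: n F => [|n IH] F HF.
  rewrite big_ord0; apply: ereal_sup_ubound; exists (fun=> 0%R) => //.
  by rewrite big_ord0.
rewrite big_ord_recr /=.
set A := [set \sum_(i < n) F (widen_ord (leqnSn n) i) (y i) | y in [set: 'I_n -> R]].
have IHA := IH (fun i => F (widen_ord (leqnSn n) i)) (fun i => HF _).
apply: (le_trans (leeD2r _ IHA)).
apply: (le_trans (@sup_add2 A _ _ (HF ord_max))).
  by apply: (lt_le_trans _ IHA); apply: sum_gtNy => i; exact: HF.
apply: ereal_sup_le => _ [a [b [[y _ <-] [t _ <-] ->]]].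
exists (fun i => if unlift ord_max i is Some j then y j else t) => //.
rewrite big_ord_recr /= unlift_none; congr (_ + _); apply: eq_bigr => i _.
have -> : widen_ord (leqnSn n) i = lift ord_max i by apply: val_inj => /=; rewrite /bump leqNgt ltn_ord.
by rewrite liftK.
Qed.


Lemma conj_nz (h : R -> \bar R) (w : R) : proper_fun h -> convex_efun h -> h 0%R = 0 ->
  accum_at0 (edom h) ->
  ereal_sup [set (w * t)%:E - h t | t in [set t | t != 0%R]] = conj1 h w.
Proof.
move=> [hNy _] hconv h0 hacc.
set T := ereal_sup _.
have T0 : 0 <= T.
  have [y [_ y0 hy]] := hacc setT filterT.
  have hyf : h y \is a fin_num by rewrite fin_numE hNy /= -ltey.
  set c := (w * y - fine (h y))%R.
  apply/lee_subgt0Pr => e e0; rewrite sub0e.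
  have ce : (0 < e + `|c| + 1)%R by have := normr_ge0 c; lra.
  set t := (e / (e + `|c| + 1))%R.
  have t0 : (0 < t)%R by rewrite divr_gt0.
  have ht : (t * (e + `|c| + 1) = e)%R by rewrite /t divfK // gt_eqF.
  have t1 : (t < 1)%R.
    have := normr_ge0 c; nra.
  apply: (@le_trans _ _ ((t * c)%R%:E)).
    rewrite lee_fin.
    have hc : (0 <= t * (c + `|c|))%R.
      by apply: mulr_ge0; [lra| have := ler_norm (- c); rewrite normrN; lra].
    nra.
  apply: (@le_trans _ _ ((w * (t * y))%:E - h (t * y)%R)); last first.
    by apply: ereal_sup_ubound; exists (t * y)%R => //=; rewrite mulf_neq0 // gt_eqF.
  have hc := hconv y 0%R t (andb_true_intro (conj t0 t1)).
  rewrite mulr0 addr0 h0 mule0 adde0 -(fineK hyf) -EFinM in hc.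
  rewrite (_ : (t * c)%:E = (w * (t * y))%:E - (t * fine (h y))%:E); last first.
    by rewrite -EFinB /c; congr (_%:E); ring.
  by apply: leeB.
apply/eqP; rewrite eq_le; apply/andP; split.
  by apply: ereal_sup_le => _ [t _ <-]; exists t.
apply/ereal_supP => _ [t _ <-].
have [->|tn0] := eqVneq t 0%R.
  by rewrite mulr0 h0 sube0.
by apply: ereal_sup_ubound; exists t.
Qed.


Lemma conj_ge0 (h : R -> \bar R) (w : R) : h 0%R = 0 -> 0 <= conj1 h w.
Proof.
move=> h0; apply: ereal_sup_ubound; exists 0%R => //.
by rewrite mulr0 h0 sube0.
Qed.

Lemma fz_aux (h : R -> \bar R) (lam w : R) (b : bool) : h 0%R = 0 -> ~~ b ->
  (w * 0 - lam * b%:R)%:E - h 0%R = 0.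
Proof. by move=> h0; case: b => // _; rewrite mulr0 mulr0n mulr0 subr0 h0 sube0. Qed.

Definition fco (lam : R) (h : R -> \bar R) {n : nat} (S0 S1 : {set 'I_n}) (w : R) (i : 'I_n) (t : R) : \bar R :=
  if ((i \in S0) ==> (t == 0%R)) && ((i \in S1) ==> (t != 0%R)) then
    (w * t - lam * (t != 0%R)%:R)%:E - h t else -oo.

Lemma fco0 (lam : R) (h : R -> \bar R) n (S0 S1 : {set 'I_n}) w i :
  h 0%R = 0 -> i \notin S1 -> fco lam h S0 S1 w i 0%R = 0.
Proof.
move=> h0 Hi1; by rewrite /fco (negbTE Hi1) eqxx implybT /= !mulr0 subr0 h0 sube0.
Qed.

Lemma sup_fco (lam : R) (h : R -> \bar R) n (S0 S1 Sb : {set 'I_n}) w i :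
  proper_fun h -> convex_efun h -> h 0%R = 0 -> accum_at0 (edom h) ->
  S0 :&: S1 = finset.set0 ->
  ereal_sup (range (fco lam h S0 S1 w i)) = g_nu_i_conj lam h S0 S1 Sb i w.
Proof.
move=> hp hc h0 hacc hdisj.
have fz := fun b => @fz_aux h lam w b h0.
have K := @conj_nz h w hp hc h0 hacc.
have C0 := @conj_ge0 h w h0.
set C := conj1 h w in K C0 *.
have low : i \notin S0 -> C - lam%:E <= ereal_sup (range (fco lam h S0 S1 w i)).
  move=> Hi0; rewrite -K leeBlDr //; apply/ereal_supP => _ [t tn0 <-].
  rewrite -leeBlDr //; apply: ereal_sup_ubound; exists t => //.
  by rewrite /fco (negbTE Hi0) tn0 implybT /= mulr1 EFinB addeAC.
have up : forall t, i \notin S0 -> t != 0%R -> (w * t - lam * (t != 0%R)%:R)%:E - h t <= C - lam%:E.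
  move=> t Hi0 tn0; rewrite tn0 /= mulr1 EFinB addeAC; apply: leeD2r.
  by rewrite -K; apply: ereal_sup_ubound; exists t.
rewrite /g_nu_i_conj; case: ifP => Hi0.
  have Hi1 : (i \in S1) = false.
    apply/negP => Hi1; have : i \in S0 :&: S1 by rewrite inE Hi0 Hi1.
    by rewrite hdisj inE.
  apply/eqP; rewrite eq_le; apply/andP; split.
    apply/ereal_supP => _ [t _ <-]; rewrite /fco Hi0 Hi1 /= andbT.
    have [->|tn] := eqVneq t 0%R; last by rewrite leNye.
    by rewrite ?eqxx /= !mulr0 subr0 h0 sube0.
  apply: ereal_sup_ubound; exists 0%R => //.
  by rewrite fco0 // Hi1.
have Hi0' : i \notin S0 by rewrite Hi0.
case: ifP => Hi1.
  apply/eqP; rewrite eq_le low // andbT.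
  apply/ereal_supP => _ [t _ <-]; rewrite /fco Hi0 Hi1 /=.
  have [->|tn] := eqVneq t 0%R; first by rewrite ?eqxx /= leNye.
  by move: (up t Hi0' tn); rewrite tn /= => H; rewrite /C in H; exact: H.
apply/eqP; rewrite eq_le; apply/andP; split.
  apply/ereal_supP => _ [t _ <-]; rewrite /fco Hi0 Hi1 /=.
  have [->|tn] := eqVneq t 0%R.
    by rewrite ?eqxx /= !mulr0 subr0 h0 sube0 le_max lexx orbT.
  rewrite le_max; apply/orP; left.
  by move: (up t Hi0' tn); rewrite tn /= => H; rewrite /C in H; exact: H.
rewrite ge_max low //=; apply: ereal_sup_ubound; exists 0%R => //.
by rewrite fco0 // Hi1.
Qed.


Lemma sum_neNy n (F : 'I_n -> \bar R) : (forall i, F i != -oo) -> \sum_(i < n) F i != -oo.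
Proof. by move=> H; rewrite -ltNye; apply: sum_gtNy => i; rewrite ltNye. Qed.

Lemma sum_neNyP n (P : pred 'I_n) (F : 'I_n -> \bar R) : (forall i, F i != -oo) ->
  \sum_(i < n | P i) F i != -oo.
Proof.
move=> H; rewrite -ltNye; apply: (big_ind (fun x => -oo < x)) => //.
  by case=> [a| |]; case=> [b| |] //= _ _; rewrite ltNyr.
by move=> i _; rewrite ltNye.
Qed.

End helpers.
Arguments fco {R} lam h {n} S0 S1 w i t.

Theorem proposition3p2 (R : realType) (lam : R) (n : nat) (h : R -> \bar R)
    (S0 S1 Sb : {set 'I_n}) :
  (0 < lam)%R -> (1 <= n)%N ->
  proper_fun h -> closed_fun h -> convex_efun h ->
  edom h 0%R -> h 0%R = 0 -> accum_at0 (edom h) ->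
  partition3 S0 S1 Sb ->
  forall v : 'I_n -> R,
    conjn (g_nu lam h S0 S1) v = \sum_(i < n) g_nu_i_conj lam h S0 S1 Sb i (v i).
Proof.
move=> lam0 _ hp _ hc _ h0 hacc [d01 _ _ _] v.
have hNy := hp.1.
have E : forall x : 'I_n -> R, (\sum_(i < n) v i * x i)%R%:E - g_nu lam h S0 S1 x =
    \sum_(i < n) fco lam h S0 S1 (v i) i (x i).
  move=> x; rewrite /g_nu.
  have etaNy : forall P, @eta_ind R P != -oo by move=> P; rewrite /eta_ind; case: ifP.
  case: (pselect (exists j, fco lam h S0 S1 (v j) j (x j) = -oo)) => [[j fj]|nall].
    rewrite [RHS](bigD1 j) //= fj addNye.
    have hsum : \sum_(i < n) h (x i) != -oo by apply: sum_neNy.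
    move: fj; rewrite /fco; case: ifP => cj fj.
      have hj : h (x j) = +oo.
        by move: fj (hNy (x j)); case: (h (x j)).
      rewrite [\sum_(i < n) h (x i)](bigD1 j) //= hj addye; last by apply: sum_neNyP.
      by rewrite addey // addye.
    rewrite /eta_ind asboolF; last first.
      move=> [H0 H1].
      have : ((j \in S0) ==> (x j == 0%R)) && ((j \in S1) ==> (x j != 0%R)).
        apply/andP; split; apply/implyP => Hj; last exact: H1.
        by apply/eqP; apply: H0.
      by rewrite cj.
    rewrite addey //.
    by move: hsum; case: (\sum_(i < n) h (x i)).
  have allf : forall j, fco lam h S0 S1 (v j) j (x j) != -oo.
    by move=> j; apply/eqP => hj; apply: nall; exists j.
  have Hc : forall j, ((j \in S0) ==> (x j == 0%R)) && ((j \in S1) ==> (x j != 0%R)).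
    move=> j; have := allf j; rewrite /fco; by case: ifP.
  have Hf : forall j, h (x j) \is a fin_num.
    move=> j; rewrite fin_numE hNy /=; apply/eqP => hj.
    by have := allf j; rewrite /fco Hc hj.
  have reg : in_region S0 S1 x.
    split => i Hi; have := Hc i; rewrite Hi /=.
      by move/andP => [/eqP].
    by move/andP => [_].
  rewrite /eta_ind asboolT // adde0.
  rewrite (eq_bigr (fun i => (fine (h (x i)))%:E)); last by move=> i _; rewrite fineK.
  rewrite [RHS](eq_bigr (fun i => (v i * x i - lam * (x i != 0%R)%:R - fine (h (x i)))%R%:E)); last first.
    by move=> i _; rewrite /fco Hc; have := Hf i; case: (h (x i)).
  rewrite !sumEFin -!EFinD; congr (_%:E).
  have Hl : (lam * (l0norm x)%:R = \sum_(i < n) lam * (x i != 0%R)%:R)%R.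
    rewrite -mulr_sumr; congr (_ * _)%R; rewrite /l0norm -sum1_card natr_sum big_mkcond.
    apply: eq_bigr => i _; rewrite (_ : (i \in _) = (x i != 0%R)); first by case: (x i != 0%R).
    by apply/idP/idP; rewrite in_setE.
  by rewrite Hl !sumrB opprD addrA.
rewrite /conjn.
rewrite (_ : [set _ | x in _] = [set \sum_(i < n) fco lam h S0 S1 (v i) i (x i) | x in [set: 'I_n -> R]]); last first.
  by apply: eq_imagel => x _; exact: E.
transitivity (\sum_(i < n) ereal_sup (range (fco lam h S0 S1 (v i) i))); last first.
  by apply: eq_bigr => i _; apply: sup_fco.
apply/eqP; rewrite eq_le; apply/andP; split.
  apply/ereal_supP => _ [x _ <-]; apply: lee_sum => i _.
  by apply: ereal_sup_ubound; exists (x i).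
apply: (@sup_sumn R n (fun i => fco lam h S0 S1 (v i) i)) => i.
rewrite (@sup_fco R lam h n S0 S1 Sb) // /g_nu_i_conj.
have C0 := @conj_ge0 R h (v i) h0.
case: ifP => _; first by rewrite ltNy0.
have CNy : -oo < conj1 h (v i) - lam%:E.
  by move: C0; case: (conj1 h (v i)) => [r| |] // _; rewrite ?ltNyr ?ltNye.
case: ifP => _ //.
by apply: (lt_le_trans CNy); rewrite le_max lexx.
Qed.
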